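(* Let $\mathcal{A}$ be a finite alphabet and $\mathbf{p},\mathbf{q}$ standard pairs on $\mathcal{A}$ such that $\mathbf{p}$ is of Type $\langle2\rangle$ and $\mathbf{q}$ is of Type $\langle4\rangle$ or of Type $\langle5\rangle$. Then the non-labeled extended Rauzy classes of $\mathbf{p}$ and $\mathbf{q}$ are different.
   Context: Let $n=\#\mathcal{A}\ge2$. A pair is $\mathbf{p}=(p_0,p_1)$ with $p_0,p_1:\mathcal{A}\to\{1,\dots,n\}$ bijections. Irreducible: $p_0^{-1}\{1,\dots,k\}\ne p_1^{-1}\{1,\dots,k\}$ for $1\le k<n$. Rauzy move of type $\varepsilon$: $\varepsilon\mathbf{p}=(p'_0,p'_1)$, $p'_\varepsilon=p_\varepsilon$, and for $z=p_\varepsilon^{-1}(n)$, $p'_{1-\varepsilon}(b)=p_{1-\varepsilon}(b)$ if $p_{1-\varepsilon}(b)\le p_{1-\varepsilon}(z)$, $=p_{1-\varepsilon}(b)+1$ if $p_{1-\varepsilon}(z)<p_{1-\varepsilon}(b)<n$, $=p_{1-\varepsilon}(z)+1$ if $p_{1-\varepsilon}(b)=n$. Left Rauzy move of type $\varepsilon$: $\tilde\varepsilon\mathbf{p}=(p'_0,p'_1)$, $p'_\varepsilon=p_\varepsilon$, and for $a=p_\varepsilon^{-1}(1)$, $p'_{1-\varepsilon}(b)=p_{1-\varepsilon}(a)-1$ if $p_{1-\varepsilon}(b)=1$, $=p_{1-\varepsilon}(b)-1$ if $1<p_{1-\varepsilon}(b)<p_{1-\varepsilon}(a)$, unchanged otherwise.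 The labeled extended Rauzy class of $\mathbf{p}$ is the set of pairs reachable from $\mathbf{p}$ by Rauzy and left Rauzy moves of both types; the non-labeled extended Rauzy class is its image under $(p_0,p_1)\mapsto p_1\circ p_0^{-1}\in\mathfrak{S}_n$. Standard: $p_0^{-1}(1)=p_1^{-1}(n)$ and $p_1^{-1}(1)=p_0^{-1}(n)$. A standard pair is piece-wise order reversing if there are $2=k_0<\dots<k_\ell=n$ with $B_i=p_0^{-1}\{k_{i-1},\dots,k_i-1\}=p_1^{-1}\{k_{i-1},\dots,k_i-1\}$ and $p_0(b)+p_1(b)=k_{i-1}+k_i-1$ for $b\in B_i$; the $B_i$ are blocks ($k$-block: $k$ letters). Chains: with the $1$-blocks $S_1,\dots,S_{k-1}$ listed left to right, chain $C_i$ is the possibly empty sequence of consecutive blocks strictly between $S_{i-1}$ and $S_i$ ($C_1$ before $S_1$, $C_k$ after $S_{k-1}$). Types (defined only for piece-wise order reversing pairs, and requiring more than one block of size $\ge2$): Type $\langle2\rangle$: all nonempty chains consist of $2$-blocks; Type $\langle4\rangle$: exactly one chain consists of a $4$-block followed by $m\ge0$ consecutive $2$-blocks and all other nonempty chains consist of $2$-blocks; Type $\langle5\rangle$: exactly one chain consists of a single $5$-block and every other nonempty chain consists of exactly one $2$-block. *)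

(* Defs.v *)
From mathcomp Require Import all_boot.
Set Implicit Arguments. Unset Strict Implicit. Unset Printing Implicit Defensive.

(* Conventions: a pair on the finite alphabet A is encoded as two functions
   A -> nat; it is a pair when each is a bijection onto {1,...,n}, n = #|A|.
   Component eps : bool is p0 for false, p1 for true. *)

Section Rauzy.
Variable A : finType.

Definition pr := ((A -> nat) * (A -> nat))%type.

Definition nA := #|A|.

Definition is_bij (f : A -> nat) : Prop :=
  injective f /\ forall a, 1 <= f a <= nA.

Definition is_pair (p : pr) : Prop := is_bij p.1 /\ is_bij p.2.

Definition irreducible (p : pr) : Prop :=
  forall k, 1 <= k < nA ->
    [set a | p.1 a <= k] != [set a | p.2 a <= k].

Definition comp (p : pr) (eps : bool) : A -> nat := if eps then p.2 else p.1.

Definition mkpr (eps : bool) (pe po : A -> nat) : pr :=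
  if eps then (po, pe) else (pe, po).

(* inverse image of value k under f (meaningful when f is a bijection) *)
Definition preim (f : A -> nat) (k : nat) : option A := [pick a | f a == k].

Definition rauzy (eps : bool) (p : pr) : pr :=
  let pe := comp p eps in
  let po := comp p (~~ eps) in
  match preim pe nA with
  | None => p
  | Some z =>
      mkpr eps pe (fun b =>
        if po b <= po z then po b
        else if po b < nA then (po b).+1
        else if po b == nA then (po z).+1
        else po b)
  end.

Definition lrauzy (eps : bool) (p : pr) : pr :=
  let pe := comp p eps in
  let po := comp p (~~ eps) in
  match preim pe 1 with
  | None => p
  | Some a =>
      mkpr eps pe (fun b =>
        if po b == 1 then (po a).-1
        else if 1 < po b < po a then (po b).-1
        else po b)
  end.

Definition rstep (p q : pr) : Prop :=
  exists eps : bool, q = rauzy eps p \/ q = lrauzy eps p.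

(* reflexive-transitive closure: the labeled extended Rauzy class of p
   is [set q | reach p q] *)
Inductive reach (p : pr) : pr -> Prop :=
  | reach_refl : reach p p
  | reach_step q r : reach p q -> rstep q r -> reach p r.

(* the permutation p1 o p0^{-1} in S_n, encoded as its one-line notation
   [:: p1(p0^{-1} 1); ...; p1(p0^{-1} n)] *)
Definition perm_of (p : pr) : seq nat :=
  [seq (match preim p.1 k with Some a => p.2 a | None => 0 end)
   | k <- iota 1 nA].

Definition nl_class (p : pr) (s : seq nat) : Prop :=
  exists q, reach p q /\ perm_of q = s.

Definition standard (p : pr) : Prop :=
  (exists a, p.1 a = 1 /\ p.2 a = nA) /\ (exists b, p.2 b = 1 /\ p.1 b = nA).

Definition pwor_wrt (p : pr) (ks : seq nat) : Prop :=
  [/\ head 0 ks = 2, last 0 ks = nA, sorted ltn ks &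
      forall i, i.+1 < size ks ->
        let lo := nth 0 ks i in let hi := nth 0 ks i.+1 in
        forall b,
          ((lo <= p.1 b < hi) = (lo <= p.2 b < hi)) /\
          (lo <= p.1 b < hi -> p.1 b + p.2 b = lo + hi - 1)].

End Rauzy.

Definition block_sizes (ks : seq nat) : seq nat :=
  [seq nth 0 ks i.+1 - nth 0 ks i | i <- iota 0 (size ks).-1].

(* chains: split the list of block sizes at the 1-blocks;
   with k-1 one-blocks we get exactly k (possibly empty) chains C_1..C_k *)
Fixpoint chains (sz : seq nat) : seq (seq nat) :=
  match sz with
  | [::] => [:: [::]]
  | x :: s => if x == 1 then [::] :: chains s
              else match chains s with
                   | c :: cs => (x :: c) :: cs
                   | [::] => [:: [:: x]]
                   end
  end.

Definition all2blocks (c : seq nat) : bool := all (fun x => x == 2) c.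

Definition many_big (sz : seq nat) : Prop := 1 < count (fun x => 2 <= x) sz.

Definition type2_sz (sz : seq nat) : Prop :=
  many_big sz /\ all all2blocks (chains sz).

Definition type4_sz (sz : seq nat) : Prop :=
  many_big sz /\
  exists i, i < size (chains sz) /\
    (exists m, nth [::] (chains sz) i = 4 :: nseq m 2) /\
    (forall j, j < size (chains sz) -> j != i ->
       all2blocks (nth [::] (chains sz) j)).

Definition type5_sz (sz : seq nat) : Prop :=
  many_big sz /\
  exists i, i < size (chains sz) /\
    nth [::] (chains sz) i = [:: 5] /\
    (forall j, j < size (chains sz) -> j != i ->
       let c := nth [::] (chains sz) j in c = [::] \/ c = [:: 2]).

Definition type2 (A : finType) (p : pr A) : Prop :=
  exists ks, pwor_wrt p ks /\ type2_sz (block_sizes ks).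
Definition type4 (A : finType) (p : pr A) : Prop :=
  exists ks, pwor_wrt p ks /\ type4_sz (block_sizes ks).
Definition type5 (A : finType) (p : pr A) : Prop :=
  exists ks, pwor_wrt p ks /\ type5_sz (block_sizes ks).

(* Main.v *)
Require Import Defs.
From mathcomp Require Import all_boot all_algebra zify.
Set Implicit Arguments. Unset Strict Implicit. Unset Printing Implicit Defensive.
Import GRing.Theory Num.Theory.

Section Inv.
Variable A : finType.
Implicit Types (p : pr A) (X Y : {set A}).

Definition cross p a b := (p.1 a < p.1 b) && (p.2 b < p.2 a).
Definition Om p a b := cross p a b || cross p b a.
Definition cr p X := \sum_(a in X) \sum_(b in X) cross p a b.
Definition qf p X := #|X| + cr p X.
Definition sg (n : nat) : int := if odd n then (-1)%R else 1%R.
Definition Z p : int := (\sum_(X : {set A}) sg (qf p X))%R.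

Lemma cross_nn p a : cross p a a = false.
Proof. by rewrite /cross ltnn. Qed.

Lemma Om_sym p a b : Om p a b = Om p b a.
Proof. by rewrite /Om orbC. Qed.

Lemma Om_nat p a b : (Om p a b : nat) = cross p a b + cross p b a.
Proof.
rewrite /Om /cross.
case h1: (p.1 a < p.1 b); case h2: (p.1 b < p.1 a) => //=; try lia;
  by case: (_ < _); case: (_ < _).
Qed.

Lemma crU1 p z X : z \notin X ->
  cr p (z |: X) = cr p X + \sum_(b in X) Om p z b.
Proof.
move=> zX; rewrite /cr big_setU1 //= big_setU1 //= cross_nn add0n.
under [X in _ + X = _]eq_bigr => a _ do rewrite big_setU1 //=.
rewrite big_split /=.
have -> : \sum_(b in X) Om p z b = \sum_(b in X) cross p z b + \sum_(b in X) cross p b z.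
  by rewrite -big_split /=; apply: eq_bigr => b _; rewrite Om_nat.
lia.
Qed.

Lemma cr0 p : cr p set0 = 0.
Proof. by rewrite /cr big_set0. Qed.

Lemma cr_ext p p' X : {in X &, forall a b, Om p' a b = Om p a b} ->
  cr p' X = cr p X.
Proof.
elim: {X}_.+1 {-2}X (ltnSn #|X|) => // n IH X.
case: (set_0Vmem X) => [->|[z zX]]; first by rewrite !cr0.
rewrite ltnS => Hn H.
have -> : X = z |: (X :\ z) by rewrite setD1K.
have zn : z \notin X :\ z by rewrite setD11.
rewrite !crU1 //.
have Hn' : #|X :\ z| < n by move: Hn; rewrite (cardsD1 z X) zX.
rewrite (IH _ Hn').
- congr (_ + _); apply: eq_bigr => b Hb; rewrite (H z b zX) //.
  by move: Hb; rewrite in_setD1 => /andP[].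
- move=> a b; rewrite !in_setD1 => /andP[_ Ha] /andP[_ Hb]; exact: (H a b Ha Hb).
Qed.

Lemma sgD m n : sg (m + n) = (sg m * sg n)%R.
Proof. by rewrite /sg oddD; case: (odd m); case: (odd n); rewrite ?mulr1 ?mulN1r ?opprK. Qed.

Lemma sg_odd m n : odd m = odd n -> sg m = sg n.
Proof. by rewrite /sg => ->. Qed.

End Inv.

Section Gen.
Variable A : finType.
Implicit Types (p : pr A) (X Y : {set A}).

Lemma odd_mod2 m n : m %% 2 = n %% 2 -> odd m = odd n.
Proof. by rewrite !modn2; case: (odd m); case: (odd n). Qed.

Lemma sum_xor (X : {set A}) (f g : A -> bool) :
  \sum_(b in X) (f b (+) g b : nat) + 2 * \sum_(b in X) (f b && g b : nat)
  = \sum_(b in X) (f b : nat) + \sum_(b in X) (g b : nat).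
Proof.
rewrite big_distrr /= -!big_split /=; apply: eq_bigr => b _.
by case: (f b); case: (g b).
Qed.

Lemma crD1 p X d : d \in X -> cr p X = cr p (X :\ d) + \sum_(b in X :\ d) Om p d b.
Proof.
move=> dX; rewrite -{1}(setD1K dX) crU1 //; by rewrite setD11.
Qed.

Definition tog (z : A) X := if z \in X then X :\ z else z |: X.
Definition TT (z d : A) X := if d \in X then tog z X else X.

Lemma tog_inv z X : tog z (tog z X) = X.
Proof.
rewrite /tog; case: (boolP (z \in X)) => zX.
  by rewrite setD11 setD1K.
by rewrite setU11 setU1K.
Qed.

Lemma TT_inv z d X : z != d -> TT z d (TT z d X) = X.
Proof.
move=> zd; rewrite /TT; case: (boolP (d \in X)) => dX; last by rewrite (negbTE dX).
have -> : d \in tog z X.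
  rewrite /tog; case: ifP => _; first by rewrite in_setD1 eq_sym zd dX.
  by rewrite in_setU1 dX orbT.
exact: tog_inv.
Qed.

Variables (p p' : pr A) (z d : A).
Hypothesis zd : z != d.
Hypothesis H1 : forall u v, u != d -> v != d -> Om p' u v = Om p u v.
Hypothesis H2 : forall v, v != d -> Om p' d v = Om p d v (+) Om p z v.
Hypothesis H3 : Om p z d.

Lemma Omzz q : Om q z z = false.
Proof. by rewrite /Om cross_nn. Qed.

Lemma qf_TT X : odd (qf p' X) = odd (qf p (TT z d X)).
Proof.
rewrite /TT /qf; case: ifP => dX; last first.
  congr (odd (_ + _)); apply: cr_ext => a b Ha Hb; apply: H1.
    by apply: contraFneq dX => <-.
  by apply: contraFneq dX => <-.
have Ed : cr p' (X :\ d) = cr p (X :\ d).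
  apply: cr_ext => a b; rewrite !in_setD1 => /andP[Ha _] /andP[Hb _]; exact: H1.
have Ex : \sum_(b in X :\ d) Om p' d b = \sum_(b in X :\ d) (Om p d b (+) Om p z b).
  apply: eq_bigr => b; rewrite in_setD1 => /andP[Hb _]; by rewrite H2 // eq_sym.
rewrite (crD1 p' dX) Ed Ex.
have Hx := sum_xor (X :\ d) (Om p d) (Om p z).
rewrite /tog; case: ifP => zX.
-
  have zXd : z \in X :\ d by rewrite in_setD1 zX andbT.
  rewrite (crD1 p zXd).
  rewrite (big_setD1 _ zXd) /= Omzz Om_sym H3 /=.
  have dXz : d \in X :\ z by rewrite in_setD1 dX andbT eq_sym zd.
  rewrite (crD1 p dXz).
  have EW : (X :\ z) :\ d = (X :\ d) :\ z by rewrite setDDl setUC -setDDl.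
  rewrite EW.
  have Hx' := sum_xor ((X :\ d) :\ z) (Om p d) (Om p z).
  have Hc : #|X| = (#|X :\ z|).+1 by rewrite (cardsD1 z X) zX.
  apply: odd_mod2; lia.
- have zXd : z \notin d |: (X :\ d) by rewrite in_setU1 in_setD1 zX andbF orbF.
  rewrite (setD1K dX) in zXd.
  have Hc : #|z |: X| = #|X|.+1 by rewrite cardsU1 zXd.
  rewrite crU1 // (big_setD1 _ dX) /= H3 (crD1 p dX) Hc.
  change (nat_of_bool true) with 1.
  apply: odd_mod2; lia.
Qed.

Lemma Z_inv : Z p' = Z p.
Proof.
have inv : cancel (TT z d) (TT z d) := fun X => TT_inv X zd.
rewrite /Z (reindex_inj (can_inj inv)) /=.
by apply: eq_bigr => X _; apply: sg_odd; rewrite qf_TT inv.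
Qed.

End Gen.

Ltac bsolve := rewrite ?eqn_leq; repeat (case: ifP => ?);
  repeat (match goal with
   | |- context [leq ?x ?y] => let H := fresh "H" in case H: (leq x y)
   end); simpl; try lia.

Lemma numR (h : nat -> nat) n c a1 b1 x :
  h n = c.+1 -> (forall y, y < n -> (h y < c.+1) = (y <= c)) ->
  (forall y, y < n -> (c.+1 < h y) = (c < y)) ->
  c < n -> x < n -> b1 <= n -> a1 < n -> a1 != b1 -> (b1 == n) = (x == c) ->
  ((a1 < b1) && (h x < h n) || (b1 < a1) && (h n < h x)) =
  ((a1 < b1) && (x < n) || (b1 < a1) && (n < x)) (+)
  ((n < b1) && (x < c) || (b1 < n) && (c < x)).
Proof.
move=> hn h1 h2 cn xn b1n a1n ab E.
rewrite hn h1 // h2 // xn.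
have -> : (n < x) = false by lia.
have -> : (n < b1) = false by lia.
rewrite andbF /= orbF.
case: (ltnP c x) => cx /=.
- have bn : b1 != n by rewrite E; apply/eqP; lia.
  have -> : b1 < n by lia.
  rewrite andbT; case: (ltngtP a1 b1) => //=; lia.
- rewrite ?andbT ?andbF ?orbF ?addbF; case: (ltngtP a1 b1) => //=; lia.
Qed.

Lemma numL (g : nat -> nat) c a1 b1 x :
  g 1 = c.-1 -> (forall y, 2 <= y -> (g y < c.-1) = (y < c)) ->
  (forall y, 2 <= y -> (c.-1 < g y) = (c <= y)) ->
  2 <= c -> 2 <= x -> 1 <= b1 -> 1 <= a1 -> a1 != b1 -> (b1 == 1) = (x == c) ->
  ((a1 < b1) && (g x < g 1) || (b1 < a1) && (g 1 < g x)) =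
  ((a1 < b1) && (x < 1) || (b1 < a1) && (1 < x)) (+)
  ((1 < b1) && (x < c) || (b1 < 1) && (c < x)).
Proof.
move=> g1 h1 h2 c2 x2 b1p a1p ab E.
rewrite g1 h1 // h2 //.
have -> : (x < 1) = false by lia.
have -> : (b1 < 1) = false by lia.
have -> : (1 < x) by lia.
rewrite ?andbF ?andbT /= ?orbF.
case: (ltnP x c) => cx /=.
- have bn : b1 != 1 by rewrite E; apply/eqP; lia.
  have -> : 1 < b1 by lia.
  case: (ltngtP a1 b1) => //=; lia.
- rewrite ?andbT ?andbF ?orbF ?addbF; case: (ltngtP a1 b1) => //=; lia.
Qed.

Section Moves.
Variable A : finType.
Implicit Types (p : pr A) (X Y : {set A}).

Lemma bij_surj (f : A -> nat) : is_bij f -> forall k, 1 <= k <= nA A -> exists a, f a = k.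
Proof.
case=> fi fr k Hk.
have U : uniq (map f (enum A)) by rewrite map_inj_uniq ?enum_uniq.
have S : {subset map f (enum A) <= iota 1 (nA A)}.
  move=> x /mapP[a _ ->]; rewrite mem_iota; have := fr a; lia.
have Sz : size (iota 1 (nA A)) <= size (map f (enum A)).
  by rewrite size_iota size_map -cardE.
have [_ E] := uniq_min_size U S Sz.
have : k \in iota 1 (nA A) by rewrite mem_iota; lia.
by rewrite -E => /mapP[a _ ->]; exists a.
Qed.

Lemma preimP (f : A -> nat) k : is_bij f -> 1 <= k <= nA A ->
  exists a, Defs.preim f k = Some a /\ f a = k.
Proof.
move=> fb Hk; rewrite /Defs.preim; case: pickP => [a /eqP Ha|H]; first by exists a.
have [a Ha] := bij_surj fb Hk; by move: (H a); rewrite Ha eqxx.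
Qed.

Definition Inv p := is_pair p /\ irreducible p.

Definition sw p : pr A := (p.2, p.1).

Lemma Om_sw p a b : Om (sw p) a b = Om p a b.
Proof. by rewrite /Om /cross /= orbC andbC [X in _ || X]andbC. Qed.

Lemma Z_sw p : Z (sw p) = Z p.
Proof.
rewrite /Z; apply: eq_bigr => X _; congr sg; rewrite /qf /cr; congr (_ + _).
rewrite exchange_big /=; apply: eq_bigr => a _; apply: eq_bigr => b _.
by rewrite /cross /= andbC.
Qed.

Lemma Inv_sw p : Inv p -> Inv (sw p).
Proof.
case=> [[H1 H2] H3]; split; first by split.
by move=> k Hk; rewrite eq_sym; apply: H3.
Qed.

Lemma rauzy_sw p : rauzy true p = sw (rauzy false (sw p)).
Proof. by case: p => p1 p2; rewrite /rauzy /=; case: (Defs.preim p2 _). Qed.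

Lemma lrauzy_sw p : lrauzy true p = sw (lrauzy false (sw p)).
Proof. by case: p => p1 p2; rewrite /lrauzy /=; case: (Defs.preim p2 _). Qed.

Hypothesis n2 : 2 <= nA A.

Lemma rauzy0 p : Inv p -> Inv (rauzy false p) /\ Z (rauzy false p) = Z p.
Proof.
case=> [[[i1 r1] [i2 r2]] irr].
have [z [Pz z1]] := preimP (conj i1 r1) (k := nA A) ltac:(lia).
have [d d2] := bij_surj (conj i2 r2) (k := nA A) ltac:(lia).
rewrite /rauzy /= Pz.
set c := p.2 z.
have zd : z != d.
  apply/eqP => E; subst d.
  have := irr (nA A).-1 ltac:(lia); move/eqP; apply.
  apply/setP => a; rewrite !inE.
  case: (eqVneq a z) => [->|az]; first by rewrite z1 d2; lia.
  have := r1 a; have := r2 a.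
  have : p.1 a != p.1 z by rewrite (inj_eq i1).
  have : p.2 a != p.2 z by rewrite (inj_eq i2).
  rewrite z1 d2; lia.
have cn : c < nA A.
  have : p.2 z != p.2 d by rewrite (inj_eq i2).
  have := r2 z; rewrite d2 /c; lia.
set h := fun v => if v <= c then v else if v < nA A then v.+1
                  else if v == nA A then c.+1 else v.
set p' : pr A := (p.1, fun b => h (p.2 b)).
have hmono x y : x < nA A -> y < nA A -> (h x < h y) = (x < y).
  move=> hx hy; rewrite /h; bsolve.
have E1 u v : u != d -> v != d -> Om p' u v = Om p u v.
  move=> ud vd.
  have : p.2 u != p.2 d by rewrite (inj_eq i2).
  have : p.2 v != p.2 d by rewrite (inj_eq i2).
  have := r2 u; have := r2 v; rewrite d2 => ? ? ? ?.
  by rewrite /Om /cross /= !hmono //; lia.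
have E2 v : v != d -> Om p' d v = Om p d v (+) Om p z v.
  move=> vd.
  have : p.2 v != p.2 d by rewrite (inj_eq i2).
  have : p.1 v != p.1 d by rewrite (inj_eq i1).
  have : (p.1 v == p.1 z) = (p.2 v == c) by rewrite /c (inj_eq i1) (inj_eq i2).
  have := r2 v; have := r1 v; have := r1 d.
  have : p.1 d != p.1 z by rewrite (inj_eq i1) eq_sym.
  rewrite /Om /cross /= d2 z1 => ? ? ? ? E ? ?.
  apply: (numR (h := h)) => //; try lia.
  - rewrite /h; case: ifP => ?; try lia; rewrite ltnn eqxx //.
  - move=> y yn; rewrite /h; case: ifP => ?; try lia. rewrite yn; lia.
  - move=> y yn; rewrite /h; case: ifP => ?; try lia. rewrite yn; lia.
have E3 : Om p z d.
  have := r1 d; have : p.1 d != p.1 z by rewrite (inj_eq i1) eq_sym.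
  rewrite /Om /cross d2 z1 -/c => ? ?; apply/orP; right; apply/andP; split; lia.
split; last exact: (Z_inv zd E1 E2 E3).
have hr x : 1 <= x <= nA A -> 1 <= h x <= nA A.
  move=> hx; rewrite /h; case: ifP => ?; try lia; case: ifP => ?; try lia;
  case: ifP => /eqP ?; lia.
have hinj x y : 1 <= x <= nA A -> 1 <= y <= nA A -> h x = h y -> x = y.
  move=> hx hy; rewrite /h.
  case: ifP => ?; case: ifP => ?; try lia; case: ifP => ?; try lia;
  try (case: ifP => /eqP ?; try lia); case: ifP => ?; try lia;
  try (case: ifP => /eqP ?; try lia).
split; first split => //; first split.
- by move=> a b /= /hinj E; apply: i2; apply: E.
- by move=> a /=; apply: hr.
move=> k Hk /=.
case: (leqP c k) => ck.
  apply/eqP => /setP /(_ z); rewrite !inE z1 /h /= -/c leqnn ck; lia.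
have -> : [set a | h (p.2 a) <= k] = [set a | p.2 a <= k].
  apply/setP => a; rewrite !inE /h; have := r2 a.
  case: ifP => ?; try lia; case: ifP => ?; try lia; case: ifP => ?; lia.
exact: irr.
Qed.

Lemma lrauzy0 p : Inv p -> Inv (lrauzy false p) /\ Z (lrauzy false p) = Z p.
Proof.
case=> [[[i1 r1] [i2 r2]] irr].
have [a [Pa a1]] := preimP (conj i1 r1) (k := 1) ltac:(lia).
have [d d2] := bij_surj (conj i2 r2) (k := 1) ltac:(lia).
rewrite /lrauzy /= Pa.
set c := p.2 a.
have ad : a != d.
  apply/eqP => E; subst d.
  have := irr 1 ltac:(lia); move/eqP; apply.
  apply/setP => b; rewrite !inE.
  case: (eqVneq b a) => [->|ba]; first by rewrite a1 d2.
  have := r1 b; have := r2 b.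
  have : p.1 b != p.1 a by rewrite (inj_eq i1).
  have : p.2 b != p.2 a by rewrite (inj_eq i2).
  rewrite a1 d2; lia.
have c2 : 2 <= c.
  have : p.2 a != p.2 d by rewrite (inj_eq i2).
  have := r2 a; rewrite d2 /c; lia.
set g := fun v => if v == 1 then c.-1 else if 1 < v < c then v.-1 else v.
set p' : pr A := (p.1, fun b => g (p.2 b)).
have gmono x y : 2 <= x -> 2 <= y -> (g x < g y) = (x < y).
  move=> hx hy; rewrite /g.
  have -> : (x == 1) = false by lia.
  have -> : (y == 1) = false by lia.
  case: ifP => ?; case: ifP => ?; lia.
have E1 u v : u != d -> v != d -> Om p' u v = Om p u v.
  move=> ud vd.
  have : p.2 u != p.2 d by rewrite (inj_eq i2).
  have : p.2 v != p.2 d by rewrite (inj_eq i2).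
  have := r2 u; have := r2 v; rewrite d2 => ? ? ? ?.
  by rewrite /Om /cross /= !gmono //; lia.
have E2 v : v != d -> Om p' d v = Om p d v (+) Om p a v.
  move=> vd.
  have : p.2 v != p.2 d by rewrite (inj_eq i2).
  have : p.1 v != p.1 d by rewrite (inj_eq i1).
  have : (p.1 v == p.1 a) = (p.2 v == c) by rewrite /c (inj_eq i1) (inj_eq i2).
  have := r2 v; have := r1 v; have := r1 d.
  rewrite /Om /cross /= d2 a1 => ? ? ? E ? ?.
  apply: (numL (g := g)) => //; try lia.
  - move=> y yn; rewrite /g.
    have -> : (y == 1) = false by lia.
    case: ifP => ?; lia.
  - move=> y yn; rewrite /g.
    have -> : (y == 1) = false by lia.
    case: ifP => ?; lia.
have E3 : Om p a d.
  have := r1 d; have : p.1 d != p.1 a by rewrite (inj_eq i1) eq_sym.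
  rewrite /Om /cross d2 a1 -/c => ? ?; apply/orP; left; apply/andP; split; lia.
split; last exact: (Z_inv ad E1 E2 E3).
have cn : c <= nA A by have := r2 a; rewrite /c; lia.
have gr x : 1 <= x <= nA A -> 1 <= g x <= nA A.
  move=> hx; rewrite /g; case: ifP => /eqP ?; try lia; case: ifP => ?; lia.
have ginj x y : 1 <= x <= nA A -> 1 <= y <= nA A -> g x = g y -> x = y.
  move=> hx hy; rewrite /g.
  case: ifP => /eqP ?; case: ifP => /eqP ?; try lia;
  repeat (case: ifP => ?; try lia).
split; first split => //; first split.
- by move=> b b' /= /ginj E; apply: i2; apply: E.
- by move=> b /=; apply: gr.
move=> k Hk /=.
case: (ltnP k c) => ck.
  apply/eqP => /setP /(_ a); rewrite !inE a1 /g /= -/c.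
  have -> : (c == 1) = false by lia.
  rewrite ltnn andbF; lia.
have -> : [set b | g (p.2 b) <= k] = [set b | p.2 b <= k].
  apply/setP => b; rewrite !inE /g; have := r2 b.
  case: ifP => /eqP ?; try lia; case: ifP => ?; lia.
exact: irr.
Qed.

Lemma step p r : Inv p -> rstep p r -> Inv r /\ Z r = Z p.
Proof.
move=> Ip [[] [->|->]].
- rewrite rauzy_sw; have [I' Z'] := rauzy0 (Inv_sw Ip).
  split; first by have := Inv_sw I'; case: (rauzy false (sw p)).
  by rewrite Z_sw Z' Z_sw.
- rewrite lrauzy_sw; have [I' Z'] := lrauzy0 (Inv_sw Ip).
  split; first by have := Inv_sw I'; case: (lrauzy false (sw p)).
  by rewrite Z_sw Z' Z_sw.
- exact: rauzy0.
- exact: lrauzy0.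
Qed.

Lemma reach_inv p r : Inv p -> reach p r -> Inv r /\ Z r = Z p.
Proof.
move=> Ip; elim=> [|q r' _ [Iq Zq] st]; first by [].
by have [Ir Zr] := step Iq st; split => //; rewrite Zr.
Qed.

End Moves.

Section Relabel.
Variable A : finType.
Implicit Types (p : pr A) (X Y : {set A}).

Lemma perm_of_nth p a : is_pair p ->
  nth 0 (perm_of p) (p.1 a).-1 = p.2 a.
Proof.
case=> [[i1 r1] _]; have := r1 a => ra.
rewrite /perm_of (nth_map 0); last by rewrite size_iota; lia.
rewrite nth_iota; last by lia.
have -> : 1 + (p.1 a).-1 = p.1 a by lia.
have [b [-> Hb]] := preimP (conj i1 r1) (r1 a).
by rewrite (i1 _ _ Hb).
Qed.

Lemma Z_relabel p (r : pr A) : is_pair p -> is_pair r -> perm_of r = perm_of p -> Z r = Z p.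
Proof.
move=> Pp Pr E.
have Pp' := Pp; have Pr' := Pr.
case: Pp' => [[i1 r1] [i2 r2]]; case: Pr' => [[j1 s1] [j2 s2]].
pose g a := odflt a (Defs.preim r.1 (p.1 a)).
have g1 a : r.1 (g a) = p.1 a.
  have [b [Hb Hb']] := preimP (conj j1 s1) (r1 a); by rewrite /g Hb.
have g2 a : r.2 (g a) = p.2 a.
  by rewrite -(perm_of_nth _ Pr) g1 E perm_of_nth.
have gi : injective g.
  by move=> a b Hab; apply: i1; rewrite -!g1 Hab.
rewrite /Z (reindex_inj (imset_inj gi)) /=.
apply: eq_bigr => X _; congr sg; rewrite /qf (card_imset _ gi); congr (_ + _).
rewrite /cr big_imset /=; last by move=> a b _ _; apply: gi.
apply: eq_bigr => a _; rewrite big_imset /=; last by move=> x y _ _; apply: gi.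
by apply: eq_bigr => b _; rewrite /cross !g1 !g2.
Qed.

Lemma standard_irr p : is_pair p -> standard p -> irreducible p.
Proof.
move=> _ [[a [a1 a2]] _] k Hk; apply/eqP => /setP /(_ a); rewrite !inE a1 a2; lia.
Qed.

End Relabel.

Local Open Scope ring_scope.

Section Sums.
Variable A : finType.
Implicit Types (X Y S B : {set A}).

Lemma sumU1 (F : {set A} -> int) x S : x \notin S ->
  \sum_(Y : {set A} | Y \subset x |: S) F Y =
  \sum_(Y : {set A} | Y \subset S) F Y + \sum_(Y : {set A} | Y \subset S) F (x |: Y).
Proof.
move=> xS; rewrite (bigID (fun Y => x \in Y)) /= addrC; congr (_ + _).
  apply: eq_bigl => Y; apply/idP/idP.
    case/andP => /subsetP H xY; apply/subsetP => y yY.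
    have := H y yY; rewrite in_setU1 => /orP[/eqP Ey|//].
    by move: xY; rewrite -Ey yY.
  move=> /subsetP H; apply/andP; split.
    by apply/subsetP => y /H yS; rewrite in_setU1 yS orbT.
  by apply/negP => /H; rewrite (negbTE xS).
rewrite (reindex_onto (fun Y => x |: Y) (fun Y => Y :\ x)) /=; last first.
  by move=> Y /andP[_ xY]; rewrite setD1K.
apply: eq_bigl => Y; rewrite setU11 andbT.
apply/idP/idP.
  case/andP => /subsetP H /eqP E; apply/subsetP => y yY.
  have yx : y != x.
    apply/eqP => Ey; move: yY; rewrite -E Ey in_setD1 eqxx.
    by [].
  by have := H y (setU1r x yY); rewrite in_setU1 (negbTE yx).
move=> /subsetP H; apply/andP; split.
  apply/subsetP => y; rewrite !in_setU1 => /orP[->//|/H ->]; by rewrite orbT.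
have xY : x \notin Y by apply/negP => /H; rewrite (negbTE xS).
by rewrite setU1K.
Qed.

Lemma sum0 (F : {set A} -> int) : \sum_(Y : {set A} | Y \subset set0) F Y = F set0.
Proof.
rewrite (eq_bigl (fun Y => Y == set0)) ?big_pred1_eq // => Y; exact: subset0.
Qed.

Lemma sum_split (G H : {set A} -> int) S B : [disjoint S & B] ->
  \sum_(Y : {set A} | Y \subset S :|: B) G (Y :&: S) * H (Y :&: B) =
  (\sum_(Y : {set A} | Y \subset S) G Y) * (\sum_(W : {set A} | W \subset B) H W).
Proof.
elim: {B}_.+1 {-2}B (ltnSn #|B|) H => // n IH B.
case: (set_0Vmem B) => [-> _ H _|[x xB]].
  rewrite setU0 sum0 big_distrl /=; apply: eq_bigr => Y YS.
  by rewrite setI0 (setIidPl YS).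
rewrite ltnS => Hn H dSB.
set B' := B :\ x.
have xB' : x \notin B' by rewrite setD11.
have EB : B = x |: B' by rewrite setD1K.
have xS : x \notin S by apply: contraL dSB => xS; apply/pred0Pn; exists x; rewrite /= xS.
have dSB' : [disjoint S & B'] by apply: disjointWr dSB; apply: subD1set.
have Hn' : (#|B'| < n)%N by move: Hn; rewrite (cardsD1 x B) xB.
have xSB : x \notin S :|: B' by rewrite in_setU negb_or xS.
rewrite EB setUCA (sumU1 _ xSB) (sumU1 _ xB').
rewrite mulrDr -(IH _ Hn' H dSB') -(IH _ Hn' (fun W => H (x |: W)) dSB').
congr (_ + _); apply: eq_bigr => Y YSB.
  have xY : x \notin Y by apply: contra xSB; apply/subsetP.
  congr (_ * H _); apply/setP => y; rewrite !inE.
  by case: (eqVneq y x) => [->|yx] /=; rewrite ?eqxx ?(negbTE xY) ?andbF.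
congr (G _ * H _).
  apply/setP => y; rewrite !inE.
  by case: (eqVneq y x) => [->|yx] /=; rewrite ?eqxx ?(negbTE xS) ?andbF.
apply/setP => y; rewrite !inE.
by case: (eqVneq y x) => [->|yx] /=; rewrite ?eqxx.
Qed.

End Sums.

Local Close Scope ring_scope.

Fixpoint Uf (k s : nat) : int :=
  match k with 0 => sg 'C(s, 2) | k'.+1 => (Uf k' s + Uf k' s.+1)%R end.

Section Blocks.
Variable A : finType.
Implicit Types (p : pr A) (X Y U V W B : {set A}).

Lemma cr_union p U V : [disjoint U & V] ->
  (forall a b, a \in U -> b \in V -> Om p a b = false) ->
  cr p (U :|: V) = cr p U + cr p V.
Proof.
move=> dUV H.
have bU (F : A -> nat) : \sum_(i in U :|: V) F i = \sum_(i in U) F i + \sum_(i in V) F i.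
  by rewrite -bigU //; apply: eq_bigl => i; rewrite inE.
rewrite /cr bU.
have Z0 a b : a \in U -> b \in V -> cross p a b = false /\ cross p b a = false.
  by move=> aU bV; have := H a b aU bV; rewrite /Om => /norP[/negbTE -> /negbTE ->].
rewrite (eq_bigr (fun a => \sum_(b in U) cross p a b)); last first.
  move=> a aU; rewrite bU [X in _ + X]big1 ?addn0 // => b bV.
  by have [-> _] := Z0 a b aU bV.
congr (_ + _); apply: eq_bigr => b bV; rewrite bU big1 ?add0n // => a aU.
by have [_ ->] := Z0 a b aU bV.
Qed.

Lemma cr_clique p W : (forall a b, a \in W -> b \in W -> a != b -> Om p a b) ->
  cr p W = 'C(#|W|, 2).
Proof.
elim: {W}_.+1 {-2}W (ltnSn #|W|) => // n IH W.
case: (set_0Vmem W) => [-> _ _|[z zW]]; first by rewrite cr0 cards0.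
rewrite ltnS => Hn H.
have -> : W = z |: (W :\ z) by rewrite setD1K.
have zn : z \notin W :\ z by rewrite setD11.
have Hn' : #|W :\ z| < n by move: Hn; rewrite (cardsD1 z W) zW.
rewrite crU1 // IH //; last first.
  move=> a b; rewrite !in_setD1 => /andP[_ Ha] /andP[_ Hb]; exact: H.
rewrite (eq_bigr (fun _ => 1)); last first.
  move=> b; rewrite in_setD1 => /andP[bz bW]; rewrite H //; by rewrite eq_sym.
by rewrite sum_nat_const muln1 cardsU1 zn add1n binS bin1 addnC.
Qed.

Lemma sum_clique B s :
  (\sum_(W : {set A} | W \subset B) sg 'C(#|W| + s, 2) = Uf #|B| s)%R.
Proof.
elim: {B}_.+1 {-2}B (ltnSn #|B|) s => // n IH B.
case: (set_0Vmem B) => [-> _ s|[z zB]]; first by rewrite sum0 cards0.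
rewrite ltnS => Hn s.
have -> : B = z |: (B :\ z) by rewrite setD1K.
have zn : z \notin B :\ z by rewrite setD11.
have Hn' : #|B :\ z| < n by move: Hn; rewrite (cardsD1 z B) zB.
rewrite sumU1 // cardsU1 zn add1n /= IH //; congr (_ + _)%R.
rewrite -IH //; apply: eq_bigr => W WB.
have zW : z \notin W by apply: contra zn; apply/subsetP.
by rewrite cardsU1 zW add1n addSnnS.
Qed.

Lemma Uf_vals : [/\ Uf 1 0 = 2%R, Uf 2 0 = 2%R, Uf 4 0 = (-4)%R & Uf 5 0 = (-8)%R].
Proof. by []. Qed.

End Blocks.

Section Count.
Variable A : finType.

Lemma card_interval (f : A -> nat) lo d : is_bij f -> 1 <= lo -> lo + d <= (nA A).+1 ->
  #|[set a | lo <= f a < lo + d]| = d.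
Proof.
move=> fb l1; elim: d => [|d IH] H.
  rewrite (_ : [set a | _] = set0) ?cards0 //; apply/setP => a; rewrite !inE; lia.
have [a0 fa0] := bij_surj fb (k := lo + d) ltac:(lia).
have -> : [set a | lo <= f a < lo + d.+1] = a0 |: [set a | lo <= f a < lo + d].
  apply/setP => a; rewrite !inE.
  case: (eqVneq a a0) => [->|aa]; first by rewrite fa0; lia.
  have : f a != f a0 by rewrite (inj_eq fb.1).
  rewrite fa0 /=; lia.
rewrite cardsU1 IH; last lia.
rewrite inE fa0; lia.
Qed.
End Count.

Section Pwor.
Variable A : finType.
Variables (p : pr A) (ks : seq nat).
Hypothesis Pp : is_pair p.
Hypothesis Hw : pwor_wrt p ks.

Let n := nA A.
Let J := (size ks).-1.
Let k j := nth 0 ks j.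

Lemma ks_size : 0 < size ks.
Proof. by case: Hw; case: ks. Qed.

Lemma k0 : k 0 = 2.
Proof. by case: Hw; rewrite /k; case: ks. Qed.

Lemma kJ : k J = n.
Proof. case: Hw => _ H _ _; by rewrite /k /J nth_last. Qed.

Lemma kmono i j : i < j <= J -> k i < k j.
Proof.
move=> Hij; case: Hw => _ _ S _.
have := sorted_ltn_nth ltn_trans 0 S; move/(_ i j); rewrite /k; apply; rewrite ?inE;
  have := ks_size; rewrite /J in Hij; lia.
Qed.

Lemma k2 j : j <= J -> 2 <= k j.
Proof.
move=> Hj; case: j Hj => [|j] Hj; first by rewrite k0.
have := kmono (i := 0) (j := j.+1) ltac:(lia); rewrite k0; lia.
Qed.

Lemma blockP j a : j < J -> (k j <= p.1 a < k j.+1) = (k j <= p.2 a < k j.+1).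
Proof.
move=> Hj; case: Hw => _ _ _ H; have := H j ltac:(rewrite /J in Hj; lia) a.
by case.
Qed.

Lemma blockS j a : j < J -> k j <= p.1 a < k j.+1 -> p.1 a + p.2 a = k j + k j.+1 - 1.
Proof.
move=> Hj; case: Hw => _ _ _ H; have := H j ltac:(rewrite /J in Hj; lia) a.
by case.
Qed.

Definition Mj j := [set a | 2 <= p.1 a < k j].
Definition Bj j := [set a | k j <= p.1 a < k j.+1].

Lemma Mj2 j a : j <= J -> a \in Mj j -> 2 <= p.2 a < k j.
Proof.
elim: j => [|j IH] Hj; rewrite !inE; first by rewrite k0; lia.
move=> Ha; case: (ltnP (p.1 a) (k j)) => H.
  have := IH ltac:(lia); rewrite inE => /(_ ltac:(lia)).
  have := kmono (i := j) (j := j.+1) ltac:(lia); lia.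
have := blockP a (j := j) ltac:(lia).
have Hlt : p.1 a < k j.+1 by lia.
rewrite H Hlt /= => /esym /andP[H1 H2].
have := k2 (j := j) ltac:(lia); lia.
Qed.

Lemma Mj_split j : j < J -> Mj j.+1 = Mj j :|: Bj j.
Proof.
move=> Hj; apply/setP => a; rewrite !inE.
have := k2 (j := j) ltac:(lia); have := kmono (i := j) (j := j.+1) ltac:(lia); lia.
Qed.

Lemma Mj_disj j : [disjoint Mj j & Bj j].
Proof.
apply/pred0P => a /=; rewrite !inE; lia.
Qed.

Lemma Mj_Om j a b : j < J -> a \in Mj j -> b \in Bj j -> Om p a b = false.
Proof.
move=> Hj Ha Hb; have := Mj2 (j := j) ltac:(lia) Ha.
move: Ha Hb; rewrite !inE => Ha Hb.
have := blockP b Hj; rewrite Hb => /esym Hb2.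
rewrite /Om /cross; lia.
Qed.

Lemma Bj_clique j a b : j < J -> a \in Bj j -> b \in Bj j -> a != b -> Om p a b.
Proof.
move=> Hj; rewrite !inE => Ha Hb ab.
have := blockS Hj Ha; have := blockS Hj Hb.
have : p.1 a != p.1 b by rewrite (inj_eq Pp.1.1).
rewrite /Om /cross; lia.
Qed.

Lemma card_Bj j : j < J -> #|Bj j| = k j.+1 - k j.
Proof.
move=> Hj; have := kmono (i := j) (j := j.+1) ltac:(lia).
have := k2 (j := j) ltac:(lia).
have : k j.+1 <= n by case: (ltnP j.+1 J) => H; [have := kmono (i:=j.+1) (j:=J) ltac:(lia)|]; rewrite -kJ;
   [lia| have -> : j.+1 = J by lia].
move=> H1 H2 H3.
rewrite /Bj (_ : k j.+1 = k j + (k j.+1 - k j)); last lia.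
rewrite card_interval //; try exact: (proj1 Pp); lia.
Qed.

End Pwor.

Section Main.
Variable A : finType.
Variables (p : pr A) (ks : seq nat).
Hypothesis Pp : is_pair p.
Hypothesis Hw : pwor_wrt p ks.

Lemma sumM j : j <= (size ks).-1 ->
  (\sum_(Y : {set A} | Y \subset Mj p ks j) sg (cr p Y) =
   \prod_(0 <= i < j) Uf (nth 0 ks i.+1 - nth 0 ks i)%N 0)%R.
Proof.
elim: j => [|j IH] Hj.
  rewrite big_nil (_ : Mj p ks 0 = set0) ?sum0 ?cr0 //.
  apply/setP => a; rewrite !inE (k0 Hw); lia.
rewrite big_nat_recr //= -IH; last lia.
rewrite (Mj_split Hw (j := j)) //.
set M := Mj p ks j; set B := Bj p ks j.
rewrite (eq_bigr (fun Y => sg (cr p (Y :&: M)) * sg (cr p (Y :&: B)))%R); last first.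
  move=> Y YMB.
  have EY : Y = (Y :&: M) :|: (Y :&: B) by rewrite -setIUr; apply/esym/setIidPl.
  rewrite {1}EY cr_union ?sgD //.
    apply: (disjointWl (subsetIr Y M)); apply: (disjointWr (subsetIr Y B)).
    exact: Mj_disj.
  move=> a b; rewrite !in_setI => /andP[_ Ha] /andP[_ Hb].
  by apply: (Mj_Om Hw (j := j) _ Ha Hb); lia.
rewrite (sum_split (fun Y => sg (cr p Y)) (fun Y => sg (cr p Y))); last exact: Mj_disj.
congr (_ * _)%R.
rewrite -(card_Bj Pp Hw (j := j)); last lia.
rewrite -sum_clique; apply: eq_bigr => W WB.
rewrite addn0 cr_clique // => a b Ha Hb ab.
apply: (Bj_clique Pp Hw (j := j) _ (subsetP WB _ Ha) (subsetP WB _ Hb) ab); lia.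
Qed.


Lemma sumOm_all z (Y : {set A}) : (forall b, b \in Y -> Om p z b) ->
  \sum_(b in Y) Om p z b = #|Y|.
Proof.
move=> H; rewrite (eq_bigr (fun _ => 1)) ?sum_nat_const ?muln1 // => b bY.
by rewrite H.
Qed.

Lemma Zform : 2 <= nA A -> standard p ->
  Z p = (- 2 * \prod_(0 <= i < (size ks).-1) Uf (nth 0 ks i.+1 - nth 0 ks i)%N 0)%R.
Proof.
move=> n2 [[al [a1 a2]] [be [b2 b1]]].
case: (Pp) => [[i1 r1] [i2 r2]].
set J := (size ks).-1.
set M := Mj p ks J.
have EM : M = [set a | 2 <= p.1 a < nA A] by rewrite /M /Mj (kJ Hw).
have ab : al != be by apply/eqP => E; move: a1; rewrite E b1; lia.
have Oal b : b != al -> Om p al b.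
  move=> ba; have : p.1 b != p.1 al by rewrite (inj_eq i1).
  have : p.2 b != p.2 al by rewrite (inj_eq i2).
  have := r1 b; have := r2 b; rewrite /Om /cross a1 a2; lia.
have Obe b : b != be -> Om p be b.
  move=> bb; have : p.1 b != p.1 be by rewrite (inj_eq i1).
  have : p.2 b != p.2 be by rewrite (inj_eq i2).
  have := r1 b; have := r2 b; rewrite /Om /cross b1 b2; lia.
have ET : [set: A] = al |: (be |: M).
  apply/setP => a; rewrite EM !inE.
  case: (eqVneq a al) => // aa; case: (eqVneq a be) => //= bb.
  have : p.1 a != p.1 al by rewrite (inj_eq i1).
  have : p.1 a != p.1 be by rewrite (inj_eq i1).
  have := r1 a; rewrite a1 b1; lia.
have alM : al \notin be |: M by rewrite EM !inE negb_or ab a1.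
have beM : be \notin M by rewrite EM !inE b1; lia.
have EZ : Z p = (\sum_(X : {set A} | X \subset [set: A]) sg (qf p X))%R.
  by apply: eq_bigl => X; rewrite subsetT.
rewrite EZ.
rewrite ET (sumU1 _ alM) !(sumU1 _ beM) -(sumM (j := J)) // mulr_sumr -!big_split /=.
apply: eq_bigr => Y YM.
have alY : al \notin Y by apply: contra alM => H; rewrite in_setU1 (subsetP YM _ H) orbT.
have beY : be \notin Y by apply: contra beM; apply: (subsetP YM).
have alY' : al \notin be |: Y by rewrite in_setU1 negb_or ab alY.
rewrite /qf !crU1 // !cardsU1 alY' beY.
rewrite !sumOm_all; last first.
all: try (move=> b; rewrite ?in_setU1 => /orP[/eqP ->|bY];
   [by apply: Oal; rewrite eq_sym| by apply: Oal; apply: contra alY => /eqP <-]).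
all: try (by move=> b bY; apply: Obe; apply: contra beY => /eqP <-).
all: try (by move=> b bY; apply: Oal; apply: contra alY => /eqP <-).
rewrite alY.
have cb : #|be |: Y| = #|Y|.+1 by rewrite cardsU1 beY.
rewrite cb /sg !oddD /=.
by case: (odd #|Y|); case: (odd (cr p Y)).
Qed.

End Main.

Local Open Scope ring_scope.

Lemma flatten_chains sz : flatten (chains sz) = [seq x <- sz | x != 1%N].
Proof.
elim: sz => [|x s IH] //=.
case: (eqVneq x 1%N) => [->|x1] //=.
by case E: (chains s) => [|c cs] /=; rewrite -IH E.
Qed.

Definition F (x : nat) : int := Uf x 0.

Lemma prod_pos2 (c : seq nat) : all (fun x => x == 2%N) c -> 0 < \prod_(x <- c) F x.
Proof.
move=> H; rewrite big_seq_cond; apply: prodr_gt0 => x /andP[xc _].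
by have /eqP -> := allP H x xc.
Qed.

Lemma prod_neg (l : seq int) i : (i < size l)%N -> nth 0 l i < 0 ->
  (forall j, (j < size l)%N -> j != i -> 0 < nth 0 l j) -> \prod_(x <- l) x < 0.
Proof.
elim: l i => [|x l IH] [|i] //= Hi Hn H; rewrite big_cons.
- rewrite (nmulr_rlt0 _ Hn) big_seq_cond; apply: prodr_gt0 => y /andP[yl _].
  have := H (index y l).+1; rewrite /= nth_index //; apply => //; by rewrite ltnS index_mem.
- have x0 : 0 < x by apply: (H 0%N).
  rewrite (pmulr_rlt0 _ x0); apply: (IH i) => // j Hj ji.
  by apply: (H j.+1).
Qed.

Definition G (c : seq nat) : int := \prod_(x <- c) F x.

Lemma P_split sz : \prod_(x <- sz) F x =
  \prod_(x <- sz | x == 1%N) F x * \prod_(c <- chains sz) G c.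
Proof.
rewrite (bigID (fun x => x == 1%N)) /=; congr (_ * _).
by rewrite -big_filter -flatten_chains big_flatten.
Qed.

Lemma ones_pos sz : 0 < \prod_(x <- sz | x == 1%N) F x.
Proof. by apply: prodr_gt0 => x /eqP ->. Qed.

Lemma sz_pos2 sz : type2_sz sz -> 0 < \prod_(x <- sz) F x.
Proof.
case=> _ H; rewrite P_split; apply: mulr_gt0; first exact: ones_pos.
rewrite big_seq_cond; apply: prodr_gt0 => c /andP[cc _].
by apply: prod_pos2; apply: (allP H).
Qed.

Lemma chains_neg cs i : (i < size cs)%N -> G (nth [::] cs i) < 0 ->
  (forall j, (j < size cs)%N -> j != i -> 0 < G (nth [::] cs j)) ->
  \prod_(c <- cs) G c < 0.
Proof.
move=> Hi Hn H; rewrite -(big_map G xpredT id).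
apply: (prod_neg (i := i)); rewrite ?size_map ?(nth_map [::]) //.
by move=> j Hj ji; rewrite (nth_map [::]) //; apply: H.
Qed.

Lemma sz_neg45 sz : type4_sz sz \/ type5_sz sz -> \prod_(x <- sz) F x < 0.
Proof.
move=> H; rewrite P_split (pmulr_rlt0 _ (ones_pos sz)).
case: H => [[_ [i [Hi [[m Hm] Ho]]]]|[_ [i [Hi [Hm Ho]]]]];
  apply: (chains_neg Hi); rewrite ?Hm.
- rewrite /G big_cons (nmulr_rlt0 _ (_ : F 4 < 0)) //; apply: prod_pos2.
  by apply/allP => x; rewrite mem_nseq => /andP[_ /eqP ->].
- by move=> j Hj ji; apply: prod_pos2; apply: Ho.
- by rewrite /G big_seq1.
- move=> j Hj ji; have := Ho j Hj ji; rewrite /= => -[->|->]; by rewrite /G ?big_nil ?big_seq1.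
Qed.

Lemma prod_blocks ks :
  \prod_(0 <= i < (size ks).-1) Uf (nth 0 ks i.+1 - nth 0 ks i)%N 0 =
  \prod_(x <- block_sizes ks) F x.
Proof. by rewrite /block_sizes big_map /index_iota subn0. Qed.

Local Close Scope ring_scope.

Lemma Z_neg (A : finType) (p : pr A) : 2 <= nA A -> is_pair p -> standard p -> type2 p -> (Z p < 0)%R.
Proof.
move=> n2 Pp Sp [ks [Hw T]].
rewrite (Zform Pp Hw n2 Sp) prod_blocks mulNr oppr_lt0.
by apply: mulr_gt0 => //; apply: sz_pos2.
Qed.

Lemma Z_pos (A : finType) (p : pr A) : 2 <= nA A -> is_pair p -> standard p ->
  type4 p \/ type5 p -> (0 < Z p)%R.
Proof.
move=> n2 Pp Sp T.
have [ks [Hw T']] : exists ks, pwor_wrt p ks /\ (type4_sz (block_sizes ks) \/ type5_sz (block_sizes ks)).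
  by case: T => [[ks [? ?]]|[ks [? ?]]]; exists ks; split => //; [left|right].
rewrite (Zform Pp Hw n2 Sp) prod_blocks mulNr oppr_gt0 (pmulr_rlt0 _ (_ : (0 < 2)%R)) //.
exact: sz_neg45.
Qed.

Theorem corollary4p10 (A : finType) (p q : pr A) :
  2 <= #|A| ->
  is_pair p -> standard p -> is_pair q -> standard q ->
  type2 p -> (type4 q \/ type5 q) ->
  ~ (forall s : seq nat, nl_class p s <-> nl_class q s).
Proof.
move=> n2 Pp Sp Pq Sq T2 T45 Heq.
have [r [Rr Er]] : nl_class q (perm_of p).
  by apply/Heq; exists p; split; [exact: reach_refl|].
have [[Pr _] Zr] := reach_inv n2 (conj Pq (standard_irr Pq Sq)) Rr.
have E : Z q = Z p by rewrite -Zr (Z_relabel Pp Pr Er).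
have := Z_neg n2 Pp Sp T2; have := Z_pos n2 Pq Sq T45.
rewrite E => H1 H2; lia.
Qed.
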